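(* Let $D\ge2$ be an integer, let $(\rho^0_{kl})_{k,l=1}^D$ be a $D\times D$ density matrix (positive semidefinite, trace one), and let $(U_{mn})_{m,n=1}^D$ be a unitary matrix. Define $\mu_n=\sum_k|U_{nk}|^2\rho^0_{kk}$, $D_{\mathrm{eff}}=\bigl[\sum_n(\rho^0_{nn})^2\bigr]^{-1}$, $$\nu_{mn}=\sum_{k\neq l}U_{mk}U_{ml}^*U_{nk}^*U_{nl}|\rho^0_{kl}|^2,\qquad R=\sum_{m,n}\nu_{mn}\ln\mu_m\ln\mu_n .$$ Then $$R\le\frac{5(\ln D)^2}{D_{\mathrm{eff}}^{1/2}}+\frac{8(\ln D)^2}{D}+\frac{4(\ln D)^2}{D^2}.$$
   Context: In the sum defining $R$, terms with $\mu_m=0$ or $\mu_n=0$ are taken to be $0$ (for such indices $\nu_{mn}=0$). *)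

(* Defs.v *)
From mathcomp Require Import all_boot all_algebra.
From mathcomp Require Import reals exp.
From mathcomp Require Export complex.
Import GRing.Theory Num.Theory.
Local Open Scope ring_scope.
Local Open Scope complex_scope.

Section Defs.
Variables (R : realType) (D : nat).

Definition abs2 (z : R[i]) : R := complex.Re z ^+ 2 + complex.Im z ^+ 2.

Definition adjmx (A : 'M[R[i]]_D) : 'M[R[i]]_D := (map_mx (@conjc R) A)^T.

Definition density_matrix (rho : 'M[R[i]]_D) : Prop :=
  adjmx rho = rho /\
  (forall x : 'cV[R[i]]_D,
      0 <= ((map_mx (@conjc R) x)^T *m rho *m x) 0 0) /\
  \tr rho = 1.

Definition unitary (U : 'M[R[i]]_D) : Prop := U *m adjmx U = 1%:M.

Definition mu (U rho : 'M[R[i]]_D) (n : 'I_D) : R :=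
  \sum_k abs2 (U n k) * complex.Re (rho k k).

Definition Deff (rho : 'M[R[i]]_D) : R :=
  (\sum_n complex.Re (rho n n) ^+ 2)^-1.

Definition nu (U rho : 'M[R[i]]_D) (m n : 'I_D) : R[i] :=
  \sum_k \sum_(l | l != k)
     U m k * (U m l)^* * (U n k)^* * U n l * (abs2 (rho k l))%:C.

Definition Rsum (U rho : 'M[R[i]]_D) : R[i] :=
  \sum_m \sum_n
    (if (mu U rho m == 0) || (mu U rho n == 0) then 0
     else nu U rho m n * (ln (mu U rho m) * ln (mu U rho n))%:C).

End Defs.

(* Main.v *)
Require Import Defs.
From mathcomp Require Import all_boot all_algebra.
From mathcomp Require Import reals exp.
From mathcomp Require Import complex.
From mathcomp Require Import sequences.
From mathcomp Require Import ring lra.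
From mathcomp Require Import order.
Import Order.TTheory GRing.Theory Num.Theory.
Local Open Scope ring_scope.
Local Open Scope complex_scope.
Section RealLemmas.
Variable R : realType.
Implicit Types x y : R.

Lemma ln_le_sub1 x : 0 < x -> ln x <= x - 1.
Proof.
move=> x0; have := @le_ln1Dx R (x - 1).
have -> : 1 + (x - 1) = x by ring.
apply; lra.
Qed.

Lemma expR_neg_bound x : 0 <= x < 1 -> expR x <= (1 - x)^-1.
Proof.
move=> /andP[x0 x1].
have h : 1 - x <= expR (- x) by have := @expR_ge1Dx R (- x).
rewrite expRN in h.
have e0 := @expR_gt0 R x.
rewrite -(invrK (expR x)) lef_pV2 ?posrE ?invr_gt0 //; lra.
Qed.

Lemma ln3_ge1 : 1 <= ln (3 : R).
Proof.
have h : expR (1 : R) <= 3.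
  have -> : (1 : R) = 6^-1 * 6%:R by field.
  rewrite expRM_natr.
  have h1 : expR (6^-1 : R) <= (1 - 6^-1)^-1 by apply: expR_neg_bound; apply/andP; split; lra.
  have h2 : (1 - 6^-1 : R)^-1 = 6/5 by field.
  rewrite h2 in h1.
  apply: (le_trans (y := (6/5) ^+ 6)).
    by rewrite lerXn2r // ?nnegrE ?expR_ge0 //; lra.
  rewrite !exprS expr0; lra.
rewrite -[X in X <= _](expRK 1) ler_ln ?posrE ?expR_gt0 //; lra.
Qed.

Lemma ln2_ge_half : 2^-1 <= ln (2 : R).
Proof.
have h : expR (2^-1 : R) <= 2.
  have h1 : expR (2^-1 : R) <= (1 - 2^-1)^-1 by apply: expR_neg_bound; apply/andP; split; lra.
  have h2 : (1 - 2^-1 : R)^-1 = 2 by field.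
  by rewrite h2 in h1.
rewrite -[X in X <= _](expRK (2^-1)) ler_ln ?posrE ?expR_gt0 //; lra.
Qed.

Lemma phi_le1 x : 0 < x -> x <= 1 -> x * ln x ^+ 2 <= 1.
Proof.
move=> x0 x1.
set v := Num.sqrt (Num.sqrt x).
have sx0 : 0 < Num.sqrt x by rewrite sqrtr_gt0.
have v0 : 0 < v by rewrite sqrtr_gt0.
have xv : x = v ^+ 4.
  by rewrite (_ : 4 = 2 * 2)%N // exprM sqr_sqrtr ?ltW // sqr_sqrtr ?ltW.
have v1 : v <= 1.
  rewrite -(expr_le1 (n:=4)) // -?xv //; exact: ltW.
have lnv : ln x = ln v *+ 4 by rewrite xv lnXn.
set t := - ln v.
have t0 : 0 <= t by rewrite /t oppr_ge0 ln_le0.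
have ht : t <= v^-1 - 1 by rewrite /t -lnV ?posrE // ln_le_sub1 // invr_gt0.
have hvt : v * t <= 1 - v.
  have : v * t <= v * (v^-1 - 1) by rewrite ler_pM2l.
  by rewrite mulrBr mulfV ?gt_eqF // mulr1.
rewrite lnv xv.
have -> : v ^+ 4 * (ln v *+ 4) ^+ 2 = 16 * (v * (v * t)) ^+ 2.
  rewrite /t; rewrite -mulr_natr; ring.
have w0 : 0 <= v * (v * t) by rewrite mulr_ge0 ?mulr_ge0 // ltW.
have w1 : v * (v * t) <= 4^-1.
  apply: (le_trans (y := v * (1 - v))); first by rewrite ler_pM2l.
  have := sqr_ge0 (v - 2^-1); nra.
have : (v * (v * t)) ^+ 2 <= 4^-1 ^+ 2 by rewrite lerXn2r // nnegrE // invr_ge0.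
lra.
Qed.

Lemma phi_split d x : 0 < d -> 1 <= ln d -> 0 < x -> x <= 1 ->
  x * ln x ^+ 2 <= 4 * ln d ^+ 2 * x + 4 * ln d ^+ 2 / d ^+ 2.
Proof.
move=> d0 L1 x0 x1.
set L := ln d.
have LL : 1 <= L := L1.
have d20 : 0 < d ^+ 2 by rewrite exprn_gt0.
have Lpos : 0 <= 4 * L ^+ 2 / d ^+ 2.
  by apply: divr_ge0; [apply: mulr_ge0; [lra|apply: sqr_ge0]|apply: ltW].
case: (leP (d ^+ 2)^-1 x) => hx.
  have lx0 : ln x <= 0 by rewrite ln_le0.
  have lx1 : - (2 * L) <= ln x.
    have -> : - (2 * L) = ln ((d ^+ 2)^-1) by rewrite lnV ?posrE // lnXn // mulr_natl.
    by rewrite ler_ln ?posrE ?invr_gt0.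
  have : ln x ^+ 2 <= 4 * L ^+ 2 by nra.
  move=> h; apply: (le_trans (y := 4 * L ^+ 2 * x)); last lra.
  by rewrite mulrC ler_pM2r.
set u := Num.sqrt (x * d ^+ 2).
have u0 : 0 < u by rewrite sqrtr_gt0 mulr_gt0.
have u2 : u ^+ 2 = x * d ^+ 2 by rewrite /u sqr_sqrtr // mulr_ge0 // ltW.
have xu : x = u ^+ 2 / d ^+ 2 by rewrite u2 mulfK // gt_eqF.
have u1 : u <= 1.
  have : u ^+ 2 <= 1.
    by rewrite u2 -ler_pdivlMr // mul1r ltW.
  by rewrite expr_le1 // ltW.
have lnx : ln x = ln u *+ 2 - 2 * L.
  rewrite xu ln_div ?posrE ?exprn_gt0 // lnXn // lnXn // mulr_natl //.
set t := - ln u.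
have t0 : 0 <= t by rewrite /t oppr_ge0 ln_le0.
have ht : t <= u^-1 - 1 by rewrite /t -lnV ?posrE // ln_le_sub1 // invr_gt0.
have hut : u * t <= 1 - u.
  have : u * t <= u * (u^-1 - 1) by rewrite ler_pM2l.
  by rewrite mulrBr mulfV ?gt_eqF // mulr1.
have -> : x * ln x ^+ 2 = 4 * (L * u + u * t) ^+ 2 / d ^+ 2.
  rewrite lnx {1}xu /t; rewrite -mulr_natr; field; rewrite gt_eqF //.
have w0 : 0 <= L * u + u * t by apply: addr_ge0; apply: mulr_ge0; lra.
have w1 : L * u + u * t <= L by nra.
have : (L * u + u * t) ^+ 2 <= L ^+ 2 by nra.
move=> h.
apply: (le_trans (y := 4 * L ^+ 2 / d ^+ 2)); last first.
  have : 0 <= 4 * L ^+ 2 * x by apply: mulr_ge0; [apply: mulr_ge0; [lra|apply: sqr_ge0]|lra].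
  lra.
rewrite ler_pM2r ?invr_gt0 //; lra.
Qed.
End RealLemmas.
Local Notation ab2 z := (abs2 _ z).
Lemma abs2E {R : realType} (z : R[i]) : (ab2 z)%:C = z * z^*.
Proof.
case: z => a b; rewrite /abs2 /=; simpc.
apply/eqP; rewrite eq_complex /=; apply/andP; split; apply/eqP; ring.
Qed.

Lemma abs2_ge0 {R : realType} (z : R[i]) : 0 <= ab2 z.
Proof. by rewrite /abs2 addr_ge0 ?sqr_ge0. Qed.

Lemma abs2M {R : realType} (z w : R[i]) : ab2 (z * w) = ab2 z * ab2 w.
Proof. by case: z => a b; case: w => c d; rewrite /abs2 /=; ring. Qed.

Lemma abs2_real {R : realType} (a : R) : ab2 a%:C = a ^+ 2.
Proof. by rewrite /abs2 /= expr0n /= addr0. Qed.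

Lemma qformE {R : realType} {D : nat} (rho : 'M[R[i]]_D) (x : 'cV[R[i]]_D) :
  ((map_mx (@conjc R) x)^T *m rho *m x) 0 0 =
  \sum_j \sum_i (x i 0)^* * rho i j * x j 0.
Proof.
rewrite !mxE; apply: eq_bigr => j _; rewrite !mxE big_distrl /=.
by apply: eq_bigr => i _; rewrite !mxE.
Qed.

Lemma sum_supp2 {R : realType} {D : nat} (F : 'I_D -> R[i]) (k l : 'I_D) :
  k != l -> (forall i, i != k -> i != l -> F i = 0) ->
  \sum_i F i = F k + F l.
Proof.
move=> kl H; rewrite (bigD1 k) //= (bigD1 l) /=; last by rewrite eq_sym.
rewrite big1 ?addr0 ?addrA // => i /andP[ik il]; exact: H.
Qed.

Lemma sum_supp1 {R : realType} {D : nat} (F : 'I_D -> R[i]) (k : 'I_D) :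
  (forall i, i != k -> F i = 0) -> \sum_i F i = F k.
Proof.
move=> H; rewrite (bigD1 k) //= big1 ?addr0 // => i ik; exact: H.
Qed.

Definition xv2 {R : realType} {D : nat} (k l : 'I_D) (a b : R[i]) : 'cV[R[i]]_D :=
  \col_i (if i == k then a else if i == l then b else 0).

Lemma qform2 {R : realType} {D : nat} (rho : 'M[R[i]]_D) (k l : 'I_D) (a b : R[i]) :
  k != l ->
  ((map_mx (@conjc R) (xv2 k l a b))^T *m rho *m (xv2 k l a b)) 0 0 =
  a^* * a * rho k k + a^* * b * rho k l + b^* * a * rho l k + b^* * b * rho l l.
Proof.
move=> kl; rewrite qformE.
have lk : (l == k) = false by apply/negbTE; rewrite eq_sym.
rewrite (@sum_supp2 _ _ _ k l kl).
- rewrite (@sum_supp2 _ _ _ k l kl); last first.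
    by move=> i ik il; rewrite !mxE (negbTE ik) (negbTE il) /= rmorph0 !mul0r.
  rewrite (@sum_supp2 _ _ _ k l kl); last first.
    by move=> i ik il; rewrite !mxE (negbTE ik) (negbTE il) /= rmorph0 !mul0r.
  rewrite !mxE !eqxx lk /=; ring.
- move=> j jk jl; rewrite big1 // => i _; rewrite !mxE (negbTE jk) (negbTE jl).
  by rewrite mulr0.
Qed.

Lemma qform1 {R : realType} {D : nat} (rho : 'M[R[i]]_D) (k : 'I_D) :
  ((map_mx (@conjc R) (\col_i (if i == k then 1 else 0)))^T *m rho
     *m (\col_i (if i == k then 1 else 0))) 0 0 = rho k k.
Proof.
rewrite qformE (@sum_supp1 _ _ _ k); last first.
  by move=> j jk; rewrite big1 // => i _; rewrite !mxE (negbTE jk) mulr0.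
rewrite (@sum_supp1 _ _ _ k); last first.
  by move=> i ik; rewrite !mxE (negbTE ik) /= rmorph0 !mul0r.
by rewrite !mxE !eqxx rmorph1 mul1r mulr1.
Qed.
Lemma complex_ext {R : realType} (x y : R[i]) :
  complex.Re x = complex.Re y -> complex.Im x = complex.Im y -> x = y.
Proof. by case: x => a b; case: y => c d /= -> ->. Qed.

Lemma dm_diag {R : realType} {D : nat} {rho : 'M[R[i]]_D} :
  density_matrix R D rho -> forall k,
  rho k k = (complex.Re (rho k k))%:C /\ 0 <= complex.Re (rho k k).
Proof.
move=> [_ [Hp _]] k.
have := Hp (\col_i (if i == k then 1 else 0)); rewrite qform1.
case: (rho k k) => a b; rewrite lecE /= => /andP[/eqP -> h]; split => //.
Qed.

Lemma dm_herm {R : realType} {D : nat} {rho : 'M[R[i]]_D} :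
  density_matrix R D rho -> forall k l, rho l k = (rho k l)^*.
Proof.
move=> [Hh _] k l.
have := congr1 (fun M : 'M[R[i]]_D => M l k) Hh.
by rewrite /adjmx !mxE => <-.
Qed.

Lemma dm_offdiag {R : realType} {D : nat} {rho : 'M[R[i]]_D} :
  density_matrix R D rho -> forall k l, k != l ->
  ab2 (rho k l) <= complex.Re (rho k k) * complex.Re (rho l l).
Proof.
move=> Hd k l kl.
have [Pk P0] := dm_diag Hd k.
have [Sl S0] := dm_diag Hd l.
have Hlk := dm_herm Hd k l.
have Hp := Hd.2.1.
set P := complex.Re (rho k k) in Pk P0 *.
set S := complex.Re (rho l l) in Sl S0 *.
set z := rho k l in Hlk *.
have w0 : 0 <= ab2 z := abs2_ge0 z.
have E : forall a b : R[i],
  ((map_mx (@conjc R) (xv2 k l a b))^T *m rho *m (xv2 k l a b)) 0 0 =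
  a^* * a * P%:C + a^* * b * z + b^* * a * z^* + b^* * b * S%:C.
  by move=> a b; rewrite qform2 // Hlk -/z; rewrite {1}Pk Sl.
have Q1 := Hp (xv2 k l (- z) P%:C); rewrite E in Q1.
have Q2 := Hp (xv2 k l S%:C (- z^*)); rewrite E in Q2.
have Q3 := Hp (xv2 k l (- z) 1); rewrite E in Q3.
have e1 : (- z)^* * - z * P%:C + (- z)^* * P%:C * z + P%:C^* * - z * z^* +
          P%:C^* * P%:C * S%:C = (P * (P * S - ab2 z))%:C.
  by case: (z) => a b; apply: complex_ext; rewrite /abs2 /=; ring.
have e2 : S%:C^* * S%:C * P%:C + S%:C^* * - z^* * z + (- z^*)^* * S%:C * z^* +
          (- z^*)^* * - z^* * S%:C = (S * (S * P - ab2 z))%:C.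
  by case: (z) => a b; apply: complex_ext; rewrite /abs2 /=; ring.
have e3 : (- z)^* * - z * P%:C + (- z)^* * 1 * z + 1^* * - z * z^* +
          1^* * 1 * S%:C = (ab2 z * P - 2 * ab2 z + S)%:C.
  by case: (z) => a b; apply: complex_ext; rewrite /abs2 /=; ring.
rewrite e1 lecR in Q1; rewrite e2 lecR in Q2; rewrite e3 lecR in Q3.
have [Ppos|Pz] := ltrP 0 P.
  rewrite pmulr_rge0 // subr_ge0 in Q1; lra.
have P00 : P = 0 by apply/le_anti/andP.
rewrite P00 mulr0 in Q2 *; rewrite P00 in Q3.
have [Spos|Sz] := ltrP 0 S.
  rewrite pmulr_rge0 // sub0r oppr_ge0 in Q2; lra.
have S00 : S = 0 by apply/le_anti/andP.
rewrite S00 in Q3; lra.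
Qed.
Lemma conjK {R : realType} (x : R[i]) : x^*^* = x.
Proof. by case: x => a b; rewrite /= opprK. Qed.

Lemma conjD' {R : realType} (x y : R[i]) : (x + y)^* = x^* + y^*.
Proof. by case: x => a b; case: y => c d; apply: complex_ext => /=; ring. Qed.

Lemma conjM' {R : realType} (x y : R[i]) : (x * y)^* = x^* * y^*.
Proof. by case: x => a b; case: y => c d; apply: complex_ext => /=; ring. Qed.

Lemma conj0' {R : realType} : (0 : R[i])^* = 0.
Proof. by apply: complex_ext => /=; ring. Qed.

Lemma conj_sum' {R : realType} {I : Type} (r : seq I) (P : pred I) (F : I -> R[i]) :
  (\sum_(i <- r | P i) F i)^* = \sum_(i <- r | P i) (F i)^*.
Proof. exact: (big_morph _ conjD' conj0'). Qed.

Lemma conj_real' {R : realType} (a : R) : (a%:C)^* = a%:C.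
Proof. by apply: complex_ext => /=; ring. Qed.

Lemma unit_row {R : realType} {D : nat} {U : 'M[R[i]]_D} :
  unitary R D U -> forall n m : 'I_D,
  \sum_l U n l * (U m l)^* = (n == m)%:R.
Proof.
move=> HU n m.
have := congr1 (fun M : 'M[R[i]]_D => M n m) HU.
rewrite !mxE /= => <-; apply: eq_bigr => l _; by rewrite !mxE.
Qed.

Lemma unit_col {R : realType} {D : nat} {U : 'M[R[i]]_D} :
  unitary R D U -> forall k : 'I_D, \sum_m ab2 (U m k) = 1.
Proof.
move=> HU k.
have H : adjmx _ _ U *m U = 1%:M := mulmx1C HU.
have := congr1 (fun M : 'M[R[i]]_D => M k k) H.
rewrite !mxE eqxx /= => E.
apply: (@complexI R); rewrite rmorph_sum /=; apply: (etrans _ E).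
apply: eq_bigr => m _; rewrite abs2E !mxE mulrC //.
Qed.

Lemma parseval {R : realType} {D : nat} {U : 'M[R[i]]_D} :
  unitary R D U -> forall z : 'I_D -> R[i],
  \sum_l ab2 (\sum_m z m * (U m l)^*) = \sum_m ab2 (z m).
Proof.
move=> HU z.
apply: (@complexI R); rewrite !rmorph_sum /=.
transitivity (\sum_l \sum_m \sum_n z m * (z n)^* * (U n l * (U m l)^*)).
  apply: eq_bigr => l _; rewrite abs2E.
  set s := \sum_(m < D) _.
  have E : s^* = \sum_n (z n)^* * U n l.
    rewrite /s; apply: etrans; first exact: conj_sum'.
    by apply: eq_bigr => n _; case: (z n) => a b; case: (U n l) => c d; apply: complex_ext => /=; ring.
  transitivity (s * \sum_n (z n)^* * U n l); first by congr (_ * _); exact: E.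
  rewrite /s big_distrl /=.
  apply: eq_bigr => m _; rewrite big_distrr /=.
  by apply: eq_bigr => n _; ring.
rewrite exchange_big /=.
transitivity (\sum_m \sum_n z m * (z n)^* * (n == m)%:R).
  apply: eq_bigr => m _; rewrite exchange_big /=.
  by apply: eq_bigr => n _; rewrite -big_distrr /= (unit_row HU).
apply: eq_bigr => m _; rewrite (bigD1 m) //= eqxx mulr1 big1 ?addr0.
  by rewrite abs2E.
by move=> n nm; rewrite (negbTE nm) mulr0.
Qed.
Definition cc {R : realType} {D : nat} (U rho : 'M[R[i]]_D) (k l : 'I_D) : R[i] :=
  \sum_m (ln (mu R D U rho m))%:C * U m k * (U m l)^*.

Lemma realM' {R : realType} (a b : R) : (a * b)%:C = a%:C * b%:C.
Proof. by apply: complex_ext => /=; ring. Qed.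

Lemma real0' {R : realType} : (0 : R)%:C = 0.
Proof. by apply: complex_ext. Qed.

Lemma real_sum' {R : realType} {I : Type} (r : seq I) (P : pred I) (F : I -> R) :
  (\sum_(i <- r | P i) F i)%:C = \sum_(i <- r | P i) (F i)%:C.
Proof.
have H : forall a b : R, (a + b)%:C = a%:C + b%:C.
  by move=> a b; apply: complex_ext => /=; rewrite ?addr0.
exact: (big_morph _ H real0').
Qed.

Lemma Rsum_eq {R : realType} {D : nat} (U rho : 'M[R[i]]_D) :
  Rsum R D U rho =
  (\sum_k \sum_(l | l != k) ab2 (rho k l) * ab2 (cc U rho k l))%:C.
Proof.
set a := fun m => (ln (mu R D U rho m))%:C.
set T := fun (m n k l : 'I_D) =>
  U m k * (U m l)^* * (U n k)^* * U n l * (ab2 (rho k l))%:C * (a m * a n).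
transitivity (\sum_m \sum_n nu R D U rho m n * (a m * a n)).
  rewrite /Rsum; apply: eq_bigr => m _; apply: eq_bigr => n _.
  case: ifP => [/orP h|_].
    have h0 : a m * a n = 0.
      case: h => /eqP h; rewrite /a h (@ln0 R 0 (lexx 0)); by apply: (@complex_ext R) => /=; ring.
    by rewrite h0 mulr0.
  by rewrite realM'.
transitivity (\sum_m \sum_n \sum_k \sum_(l | l != k) T m n k l).
  apply: eq_bigr => m _; apply: eq_bigr => n _.
  rewrite /nu big_distrl /=; apply: eq_bigr => k _.
  by rewrite big_distrl.
transitivity (\sum_k \sum_(l | l != k) \sum_m \sum_n T m n k l).
  transitivity (\sum_m \sum_k \sum_n \sum_(l | l != k) T m n k l).
    by apply: eq_bigr => m _; rewrite exchange_big.
  rewrite exchange_big /=; apply: eq_bigr => k _.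
  transitivity (\sum_m \sum_(l | l != k) \sum_n T m n k l).
    by apply: eq_bigr => m _; rewrite exchange_big.
  by rewrite exchange_big.
rewrite real_sum'; apply: eq_bigr => k _.
rewrite real_sum'; apply: eq_bigr => l _.
rewrite realM' (abs2E (cc U rho k l)).
have E : (cc U rho k l)^* = \sum_n a n * (U n k)^* * U n l.
  rewrite /cc; apply: etrans; first exact: conj_sum'.
  apply: eq_bigr => n _; rewrite /a.
  by case: (U n k) => x1 y1; case: (U n l) => x2 y2; apply: complex_ext => /=; ring.
transitivity ((ab2 (rho k l))%:C * (cc U rho k l * \sum_n a n * (U n k)^* * U n l));
  last by congr (_ * (_ * _)); exact: (esym E).
rewrite /cc big_distrl big_distrr /=; apply: eq_bigr => m _.
rewrite big_distrr big_distrr /=; apply: eq_bigr => n _.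
rewrite /T /a; ring.
Qed.
Lemma Re_sum' {R : realType} {I : Type} (r : seq I) (P : pred I) (F : I -> R[i]) :
  complex.Re (\sum_(i <- r | P i) F i) = \sum_(i <- r | P i) complex.Re (F i).
Proof.
have H : forall a b : R[i], complex.Re (a + b) = complex.Re a + complex.Re b.
  by case=> ? ?; case=> ? ?.
by apply: (big_morph _ H).
Qed.

Lemma sum_p {R : realType} {D : nat} {rho : 'M[R[i]]_D} :
  density_matrix R D rho -> \sum_k complex.Re (rho k k) = 1.
Proof.
move=> [_ [_ Ht]].
have := congr1 (@complex.Re R) Ht; rewrite /mxtrace Re_sum' => ->.
by [].
Qed.

Lemma p_ge0 {R : realType} {D : nat} {rho : 'M[R[i]]_D} :
  density_matrix R D rho -> forall k, 0 <= complex.Re (rho k k).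
Proof. by move=> Hd k; case: (dm_diag Hd k). Qed.

Lemma mu_ge0 {R : realType} {D : nat} (U : 'M[R[i]]_D) {rho : 'M[R[i]]_D} :
  density_matrix R D rho -> forall m, 0 <= mu R D U rho m.
Proof.
move=> Hd m; apply: sumr_ge0 => k _; apply: mulr_ge0; [exact: abs2_ge0|exact: p_ge0].
Qed.

Lemma sum_mu {R : realType} {D : nat} {U rho : 'M[R[i]]_D} :
  density_matrix R D rho -> unitary R D U -> \sum_m mu R D U rho m = 1.
Proof.
move=> Hd HU; rewrite /mu exchange_big /= -(sum_p Hd).
apply: eq_bigr => k _; by rewrite -mulr_suml unit_col // mul1r.
Qed.

Lemma mu_le1 {R : realType} {D : nat} {U rho : 'M[R[i]]_D} :
  density_matrix R D rho -> unitary R D U -> forall m, mu R D U rho m <= 1.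
Proof.
move=> Hd HU m; rewrite -(sum_mu Hd HU) (bigD1 m) //= lerDl.
by apply: sumr_ge0 => i _; exact: mu_ge0.
Qed.

Lemma p_le_q {R : realType} {D : nat} {rho : 'M[R[i]]_D} :
  density_matrix R D rho -> forall l,
  complex.Re (rho l l) <= Num.sqrt (\sum_n complex.Re (rho n n) ^+ 2).
Proof.
move=> Hd l.
have h : complex.Re (rho l l) ^+ 2 <= \sum_n complex.Re (rho n n) ^+ 2.
  rewrite (bigD1 l) //= lerDl; apply: sumr_ge0 => i _; exact: sqr_ge0.
rewrite -(ger0_norm (p_ge0 Hd l)) -sqrtr_sqr ler_sqrt //.
apply: sumr_ge0 => i _; exact: sqr_ge0.
Qed.

Lemma q_le1 {R : realType} {D : nat} {rho : 'M[R[i]]_D} :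
  density_matrix R D rho ->
  Num.sqrt (\sum_n complex.Re (rho n n) ^+ 2) <= 1.
Proof.
move=> Hd; rewrite -(sqrtr1 R) ler_sqrt // -(sum_p Hd).
apply: ler_sum => n _.
have h0 := p_ge0 Hd n.
have h1 : complex.Re (rho n n) <= 1.
  rewrite -(sum_p Hd) (bigD1 n) //= lerDl; apply: sumr_ge0 => i _; exact: p_ge0.
by rewrite expr2 ler_piMr.
Qed.
Lemma eqle {R : realType} (x y : R) : x = y -> x <= y.
Proof. by move=> ->. Qed.

Lemma S_le {R : realType} {D : nat} {U rho : 'M[R[i]]_D} :
  density_matrix R D rho -> unitary R D U ->
  \sum_k \sum_(l | l != k) ab2 (rho k l) * ab2 (cc U rho k l) <=
  Num.sqrt (\sum_n complex.Re (rho n n) ^+ 2) *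
    \sum_m mu R D U rho m * ln (mu R D U rho m) ^+ 2.
Proof.
move=> Hd HU.
set q := Num.sqrt _.
set p := fun k => complex.Re (rho k k).
have q0 : 0 <= q by apply: sqrtr_ge0.
have pq : forall l, p l <= q by move=> l; exact: p_le_q.
have p0 : forall l, 0 <= p l by move=> l; exact: p_ge0.
apply: (le_trans (y := \sum_k p k * q * \sum_l ab2 (cc U rho k l))).
  apply: ler_sum => k _; rewrite mulr_sumr.
  apply: (le_trans (y := \sum_(l | l != k) p k * q * ab2 (cc U rho k l))).
    apply: ler_sum => l lk.
    apply: ler_wpM2r; first exact: abs2_ge0.
    have kl : k != l by rewrite eq_sym.
    apply: (le_trans (dm_offdiag Hd k l kl)).
    by rewrite -/(p k) -/(p l) ler_wpM2l.
  rewrite [X in _ <= X](bigD1 k) //= lerDr.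
  by apply: mulr_ge0; [apply: mulr_ge0|apply: abs2_ge0].
have Pk : forall k, \sum_l ab2 (cc U rho k l) =
    \sum_m ln (mu R D U rho m) ^+ 2 * ab2 (U m k).
  move=> k.
  have := parseval HU (fun m => (ln (mu R D U rho m))%:C * U m k).
  move=> /= E; apply: etrans; first exact: E.
  by apply: eq_bigr => m _; rewrite abs2M abs2_real.
under eq_bigr do rewrite Pk.
apply: eqle.
transitivity (\sum_k \sum_m q * (ln (mu R D U rho m) ^+ 2 * (ab2 (U m k) * p k))).
  apply: eq_bigr => k _; rewrite big_distrr /=; apply: eq_bigr => m _; ring.
rewrite exchange_big /= big_distrr /=; apply: eq_bigr => m _.
rewrite -big_distrr /= -big_distrr /=; congr (_ * _).
rewrite /mu mulrC; congr (_ * _).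
Qed.
Lemma Phi_le3 {R : realType} {D : nat} {U rho : 'M[R[i]]_D} :
  density_matrix R D rho -> unitary R D U -> (3 <= D)%N ->
  \sum_m mu R D U rho m * ln (mu R D U rho m) ^+ 2 <=
  4 * ln (D%:R : R) ^+ 2 + 4 * ln (D%:R : R) ^+ 2 / D%:R.
Proof.
move=> Hd HU D3.
set d : R := D%:R.
have d3 : 3 <= d by rewrite /d (ler_nat R 3 D).
have d0 : 0 < d by lra.
have L1 : 1 <= ln d.
  apply: (le_trans (ln3_ge1 R)); rewrite ler_ln ?posrE //; lra.
set L := ln d in L1 *.
apply: (le_trans (y := \sum_(m < D) (4 * L ^+ 2 * mu R D U rho m + 4 * L ^+ 2 / d ^+ 2))).
  apply: ler_sum => m _.
  have m0 := mu_ge0 U Hd m.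
  have m1 := mu_le1 Hd HU m.
  have [mpos|mz] := ltrP 0 (mu R D U rho m).
    exact: phi_split.
  have -> : mu R D U rho m = 0 by apply/le_anti/andP.
  rewrite mul0r mulr0 add0r; apply: divr_ge0; last by apply: sqr_ge0.
  by apply: mulr_ge0; [lra|apply: sqr_ge0].
rewrite big_split /= -big_distrr /= (sum_mu Hd HU) mulr1 sumr_const card_ord.
rewrite -mulr_natr -/d.
apply: eqle; field; lra.
Qed.

Lemma Phi_le2 {R : realType} {D : nat} {U rho : 'M[R[i]]_D} :
  density_matrix R D rho -> unitary R D U ->
  \sum_m mu R D U rho m * ln (mu R D U rho m) ^+ 2 <= D%:R.
Proof.
move=> Hd HU.
apply: (le_trans (y := \sum_(m < D) (1 : R))).
  apply: ler_sum => m _.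
  have m0 := mu_ge0 U Hd m.
  have m1 := mu_le1 Hd HU m.
  have [mpos|mz] := ltrP 0 (mu R D U rho m).
    exact: phi_le1.
  have -> : mu R D U rho m = 0 by apply/le_anti/andP.
  by rewrite mul0r.
by rewrite sumr_const card_ord.
Qed.
Theorem theorem3 (R : realType) (D : nat) (hD : (2 <= D)%N)
    (rho U : 'M[R[i]]_D) :
  @density_matrix R D rho -> @unitary R D U ->
  @Rsum R D U rho <=
    (5 * ln (D%:R : R) ^+ 2 / Num.sqrt (@Deff R D rho)
     + 8 * ln (D%:R : R) ^+ 2 / D%:R
     + 4 * ln (D%:R : R) ^+ 2 / (D%:R ^+ 2))%:C.
Proof.
move=> Hd HU.
rewrite Rsum_eq lecR.
apply: (le_trans (S_le Hd HU)).
set q := Num.sqrt _.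
set Phi := \sum_m _.
have q0 : 0 <= q by apply: sqrtr_ge0.
have q1 : q <= 1 by apply: q_le1.
have s0 : 0 <= \sum_n complex.Re (rho n n) ^+ 2.
  by apply: sumr_ge0 => n _; apply: sqr_ge0.
have -> : Num.sqrt (Deff R D rho) = q^-1 by rewrite /Deff sqrtrV.
rewrite invrK.
set d : R := D%:R.
have d2 : 2 <= d by rewrite /d (ler_nat R 2 D).
have d0 : 0 < d by lra.
set L := ln d.
have L0 : 0 <= L by rewrite /L ln_ge0 //; lra.
have X0 : 0 <= L ^+ 2 by apply: sqr_ge0.
have [D3|D2] := leqP 3 D.
  have HP := Phi_le3 Hd HU D3; rewrite -/d -/L -/Phi in HP.
  set Y := d^-1.
  have Y0 : 0 <= Y by rewrite /Y invr_ge0 ltW.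
  rewrite -/Y in HP.
  have -> : 4 * L ^+ 2 / d ^+ 2 = 4 * L ^+ 2 * Y ^+ 2 by rewrite /Y exprVn.
  have h1 : q * Phi <= q * (4 * L ^+ 2 + 4 * L ^+ 2 * Y) by rewrite ler_wpM2l.
  have h2 : 0 <= (1 - q) * (L ^+ 2 * Y) by apply: mulr_ge0; [lra|apply: mulr_ge0].
  have h3 : 0 <= L ^+ 2 * Y ^+ 2 by apply: mulr_ge0 => //; apply: sqr_ge0.
  have h4 : 0 <= L ^+ 2 * q by apply: mulr_ge0.
  have h5 : 0 <= L ^+ 2 * Y by apply: mulr_ge0.
  nra.
have D2' : D = 2%N by apply/eqP; rewrite eqn_leq hD andbT -ltnS.
have HP := Phi_le2 Hd HU; rewrite -/d -/Phi in HP.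
have dd : d = 2 by rewrite /d D2'.
rewrite dd in HP *.
have L2 : 2^-1 <= L by rewrite /L dd; apply: ln2_ge_half.
have LL : 4^-1 <= L ^+ 2.
  have : 2^-1 ^+ 2 <= L ^+ 2 by rewrite lerXn2r // nnegrE; lra.
  have -> : (2^-1 : R) ^+ 2 = 4^-1 by field.
  done.
have h1 : q * Phi <= q * 2 by rewrite ler_wpM2l.
have h4 : 4^-1 * q <= L ^+ 2 * q by rewrite ler_wpM2r.
have -> : 8 * L ^+ 2 / 2 = 4 * L ^+ 2 by field.
have -> : 4 * L ^+ 2 / 2 ^+ 2 = L ^+ 2 by field.
lra.
Qed.
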